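(* For every integer $d\ge 0$, $$\frac14\sum_{\ell=0}^{\lfloor d/3\rfloor}\;\sum_{m=0}^{\lfloor (d-3\ell)/2\rfloor}(d-3\ell-2m+1)^2(m+1)^2(d-3\ell-m+2)^2=\binom{d+8}{d}.$$ *)

(* Defs.v *)
From mathcomp Require Import all_boot all_order all_algebra.

(* Main.v *)
Require Import Defs.
From mathcomp Require Import all_boot all_order all_algebra.
From mathcomp Require Import ring lra zify.
Import GRing.Theory Num.Theory.
Local Open Scope ring_scope.

Definition Q0 (k K : rat) : rat := 1018 * k ^+ 0 * K ^+ 1 + 315 * k ^+ 0 * K ^+ 2 - 1645 * k ^+ 0 * K ^+ 3 + 315 * k ^+ 0 * K ^+ 4 + 777 * k ^+ 0 * K ^+ 5 - 420 * k ^+ 0 * K ^+ 6 + 60 * k ^+ 0 * K ^+ 7 + 3234 * k ^+ 1 * K ^+ 1 + 3045 * k ^+ 1 * K ^+ 2 - 3990 * k ^+ 1 * K ^+ 3 - 1365 * k ^+ 1 * K ^+ 4 + 2016 * k ^+ 1 * K ^+ 5 - 420 * k ^+ 1 * K ^+ 6 + 3598 * k ^+ 2 * K ^+ 1 + 5670 * k ^+ 2 * K ^+ 2 - 1960 * k ^+ 2 * K ^+ 3 - 2940 * k ^+ 2 * K ^+ 4 + 1092 * k ^+ 2 * K ^+ 5 + 1680 * k ^+ 3 * K ^+ 1 + 3780 * k ^+ 3 * K ^+ 2 + 840 * k ^+ 3 * K ^+ 3 - 1260 * k ^+ 3 * K ^+ 4 + 280 * k ^+ 4 * K ^+ 1 +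 840 * k ^+ 4 * K ^+ 2 + 560 * k ^+ 4 * K ^+ 3.
Definition Q1 (k K : rat) : rat := 3762 * k ^+ 0 * K ^+ 1 + 3780 * k ^+ 0 * K ^+ 2 - 3990 * k ^+ 0 * K ^+ 3 - 1260 * k ^+ 0 * K ^+ 4 + 2058 * k ^+ 0 * K ^+ 5 - 630 * k ^+ 0 * K ^+ 6 + 60 * k ^+ 0 * K ^+ 7 + 8232 * k ^+ 1 * K ^+ 1 + 11970 * k ^+ 1 * K ^+ 2 - 5040 * k ^+ 1 * K ^+ 3 - 5250 * k ^+ 1 * K ^+ 4 + 3108 * k ^+ 1 * K ^+ 5 - 420 * k ^+ 1 * K ^+ 6 + 6538 * k ^+ 2 * K ^+ 1 + 12600 * k ^+ 2 * K ^+ 2 + 140 * k ^+ 2 * K ^+ 3 - 4830 * k ^+ 2 * K ^+ 4 + 1092 * k ^+ 2 * K ^+ 5 + 2240 * k ^+ 3 * K ^+ 1 + 5460 * k ^+ 3 * K ^+ 2 + 1960 * k ^+ 3 * K ^+ 3 - 1260 * k ^+ 3 * K ^+ 4 + 280 * k ^+ 4 * K ^+ 1 + 840 * k ^+ 4 * K ^+ 2 + 560 * k ^+ 4 * K ^+ 3.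

Definition p (e : rat) (k m : rat) : rat :=
  (2 * k + e - 2 * m + 1) ^+ 2 * (m + 1) ^+ 2 * (2 * k + e - m + 2) ^+ 2.



Lemma Q0_0 (k : rat) : Q0 k 0%:R = 0.
Proof. rewrite /Q0. ring. Qed.
Lemma Q1_0 (k : rat) : Q1 k 0%:R = 0.
Proof. rewrite /Q1. ring. Qed.
Lemma Q0_S (k : rat) (K : nat) : Q0 k K%:R + p 0 k K%:R * 105 = Q0 k K.+1%:R.
Proof. rewrite -(natr1 K) /Q0 /p. ring. Qed.
Lemma Q1_S (k : rat) (K : nat) : Q1 k K%:R + p 1 k K%:R * 105 = Q1 k K.+1%:R.
Proof. rewrite -(natr1 K) /Q1 /p. ring. Qed.

Lemma sumQ0 (k : rat) (K : nat) :
  (\sum_(0 <= m < K) p 0 k m%:R) * 105 = Q0 k K%:R.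
Proof.
elim: K => [|K IH]; first by rewrite big_nil mul0r Q0_0.
rewrite big_nat_recr; last by [].
rewrite mulrDl IH Q0_S; reflexivity.
Qed.
Lemma sumQ1 (k : rat) (K : nat) :
  (\sum_(0 <= m < K) p 1 k m%:R) * 105 = Q1 k K%:R.
Proof.
elim: K => [|K IH]; first by rewrite big_nil mul0r Q1_0.
rewrite big_nat_recr; last by [].
rewrite mulrDl IH Q1_S; reflexivity.
Qed.

Definition F (n : nat) : rat :=
  \sum_(0 <= m < (n %/ 2).+1)
    (((n - 2 * m + 1) ^ 2 * (m + 1) ^ 2 * (n - m + 2) ^ 2)%N)%:R.

Definition H (x : rat) : rat :=
  (x + 1) * (x + 2) * (x + 3) * (x + 4) * (x + 5) * (x + 6) * (x + 7) * (x + 8).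

Lemma term0 (j m : nat) :
  (((2 * (j + m) - 2 * m + 1) ^ 2 * (m + 1) ^ 2 * (2 * (j + m) - m + 2) ^ 2)%N)%:R
  = p 0 (j + m)%:R m%:R.
Proof.
have -> : (2 * (j + m) - 2 * m = 2 * j)%N by lia.
have -> : (2 * (j + m) - m = 2 * j + m)%N by lia.
rewrite /p !natrM ?natrX !natrD ?natrM. ring.
Qed.
Lemma term1 (j m : nat) :
  (((2 * (j + m) + 1 - 2 * m + 1) ^ 2 * (m + 1) ^ 2 * (2 * (j + m) + 1 - m + 2) ^ 2)%N)%:R
  = p 1 (j + m)%:R m%:R.
Proof.
have -> : (2 * (j + m) + 1 - 2 * m = 2 * j + 1)%N by lia.
have -> : (2 * (j + m) + 1 - m = 2 * j + m + 1)%N by lia.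
rewrite /p !natrM ?natrX !natrD ?natrM. ring.
Qed.

Lemma Feven (k : nat) : F (2 * k) * 105 = Q0 k%:R k.+1%:R.
Proof.
rewrite /F mulKn // -sumQ0; congr (_ * _).
apply: eq_big_nat => m /andP[_ Hm].
have -> : k = (k - m + m)%N by rewrite subnK.
by rewrite term0.
Qed.
Lemma Fodd (k : nat) : F (2 * k + 1) * 105 = Q1 k%:R k.+1%:R.
Proof.
rewrite /F; have -> : ((2 * k + 1) %/ 2 = k)%N by lia.
rewrite -sumQ1; congr (_ * _).
apply: eq_big_nat => m /andP[_ Hm].
have -> : k = (k - m + m)%N by rewrite subnK.
by rewrite term1.
Qed.

Lemma HQ0 (x : rat) : Q0 x (x + 1) * 96 = H (2 * x) - H (2 * x - 3).
Proof. rewrite /Q0 /H. ring. Qed.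
Lemma HQ1 (x : rat) : Q1 x (x + 1) * 96 = H (2 * x + 1) - H (2 * x + 1 - 3).
Proof. rewrite /Q1 /H. ring. Qed.


Lemma n105 : (105 : rat) != 0. Proof. by rewrite pnatr_eq0. Qed.

Lemma Fkey (n : nat) : F n * 10080 = H n%:R - H (n%:R - 3).
Proof.
rewrite -(odd_double_half n); case: (odd n).
- rewrite add1n -addn1 -mul2n.
  have E1 := Fodd (n./2); have E2 := HQ1 (n./2)%:R.
  rewrite -(natr1 (n./2)) in E1.
  rewrite natrD natrM -E2 -E1. ring.
- rewrite add0n -mul2n.
  have E1 := Feven (n./2); have E2 := HQ0 (n./2)%:R.
  rewrite -(natr1 (n./2)) in E1.
  rewrite natrM -E2 -E1. ring.
Qed.


Lemma aux (q r : nat) : (r < 3)%N ->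
  (\sum_(0 <= l < q.+1) F (3 * q + r - 3 * l)) * 10080 = H (3 * q + r)%:R.
Proof.
move=> Hr; elim: q => [|q IH].
- rewrite big_nat1 muln0 add0n subn0 Fkey.
  suff -> : H (r%:R - 3) = 0 by rewrite subr0.
  case: r Hr => [|[|[|r]]] Hr; first [ by rewrite /H; ring | by [] ].
- rewrite big_nat_recl; last by [].
  have -> : \sum_(0 <= l < q.+1) F (3 * q.+1 + r - 3 * l.+1)
          = \sum_(0 <= l < q.+1) F (3 * q + r - 3 * l).
    apply: eq_big_nat => l /andP[_ Hl]; congr F; lia.
  rewrite mulrDl IH muln0 subn0 Fkey.
  have -> : (3 * q.+1 + r = 3 * q + r + 3)%N by lia.
  rewrite natrD addrK subrK; reflexivity.
Qed.

Lemma binH (d : nat) : ('C(d + 8, d))%:R * (4 * 10080) = H d%:R :> rat.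
Proof.
have -> : 'C(d + 8, d) = 'C(d + 8, 8).
  by rewrite -(bin_sub (leq_addl d 8)) addnK.
elim: d => [|d IH].
  rewrite add0n binn /H; ring.
have E : (d.+1 * 'C(d + 9, 8) = (d + 9) * 'C(d + 8, 8))%N.
  have := mul_bin_down (d + 9) 8.
  have -> : (d + 9).-1 = (d + 8)%N by lia.
  have -> : (d + 9 - 8 = d.+1)%N by lia.
  by move=> ->.
have -> : (d.+1 + 8 = d + 9)%N by lia.
apply: (mulIf (_ : d.+1%:R != 0 :> rat)); first by rewrite pnatr_eq0.
have Er : d.+1%:R * ('C(d + 9, 8))%:R = (d + 9)%:R * ('C(d + 8, 8))%:R :> rat.
  by rewrite -!natrM E.
transitivity ((d.+1%:R * ('C(d + 9, 8))%:R) * (4 * 10080) : rat); first ring.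
rewrite Er.
transitivity ((d + 9)%:R * (('C(d + 8, 8))%:R * (4 * 10080)) : rat); first ring.
rewrite IH /H -(natr1 d) natrD. ring.
Qed.

Theorem lemma5p7 (d : nat) :
  (1 / 4 : rat) *
    \sum_(0 <= l < (d %/ 3).+1)
      \sum_(0 <= m < ((d - 3 * l) %/ 2).+1)
        (((d - 3 * l - 2 * m + 1) ^ 2 * (m + 1) ^ 2 * (d - 3 * l - m + 2) ^ 2)%N)%:R
  = ('C(d + 8, d))%:R.
Proof.
have E := aux (d %/ 3) (d %% 3) (ltn_pmod d (isT : (0 < 3)%N)).
have Ed : (3 * (d %/ 3) + d %% 3 = d)%N by lia.
rewrite Ed in E.
rewrite -[LHS]/((1 / 4) * \sum_(0 <= l < (d %/ 3).+1) F (d - 3 * l)).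
apply: (mulIf (_ : ((4 * 10080) : rat) != 0)); first by rewrite mulf_neq0 ?pnatr_eq0.
rewrite binH -E.
field.
exact: isT.
Qed.
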